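(* Let $K$ be a field of characteristic $0$, let $L=\mathcal{L}(x,y)$ be the free Lie algebra over $K$ freely generated by $x,y$, let $\delta$ be the derivation of $L$ with $\delta(x)=0$, $\delta(y)=x$, and $L^\delta=\ker\delta$. Let $f\in L$ with $\deg_y(f)=2$. Then $f\in L^\delta$ if and only if $f$ belongs to the Lie subalgebra of $L$ generated by $x$ and $[y,x]$. *)

(* Defs.v *)
From mathcomp Require Import all_boot all_order all_algebra.
Set Implicit Arguments. Unset Strict Implicit. Unset Printing Implicit Defensive.
Import GRing.Theory.
Local Open Scope ring_scope.

(* Ambient algebra: noncommutative formal series K<<x,y>> over the alphabet
   {x,y}, encoded as functions from words to coefficients.
   Letter x is [false], letter y is [true]. *)
Definition ncs (K : fieldType) := seq bool -> K.

Section NC.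
Variable K : fieldType.

Definition nc_zero : ncs K := fun _ => 0.
Definition nc_add (f g : ncs K) : ncs K := fun w => f w + g w.
Definition nc_scale (a : K) (f : ncs K) : ncs K := fun w => a * f w.
Definition nc_mul (f g : ncs K) : ncs K :=
  fun w => \sum_(i < (size w).+1) f (take i w) * g (drop i w).
Definition nc_bracket (f g : ncs K) : ncs K :=
  fun w => nc_mul f g w - nc_mul g f w.

Definition nc_x : ncs K := fun w => if w == [:: false] then 1 else 0.
Definition nc_y : ncs K := fun w => if w == [:: true] then 1 else 0.

Inductive lie_gen (S : ncs K -> Prop) : ncs K -> Prop :=
| lie_gen_base f : S f -> lie_gen S f
| lie_gen_zero : lie_gen S nc_zero
| lie_gen_add f g : lie_gen S f -> lie_gen S g -> lie_gen S (nc_add f g)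
| lie_gen_scale a f : lie_gen S f -> lie_gen S (nc_scale a f)
| lie_gen_bracket f g : lie_gen S f -> lie_gen S g -> lie_gen S (nc_bracket f g).

(* The free Lie algebra L(x,y): the Lie subalgebra of K<x,y> generated by x,y
   (Lie polynomials). *)
Definition free_lie (f : ncs K) : Prop := lie_gen (fun g => g = nc_x \/ g = nc_y) f.

(* The derivation delta with delta(x)=0, delta(y)=x, i.e. on a word it is the
   sum over the words obtained by replacing one occurrence of y by x. *)
Definition nc_delta (f : ncs K) : ncs K :=
  fun w => \sum_(i < size w | nth true w i == false) f (set_nth false w i true).

Definition deg_y_eq (f : ncs K) (n : nat) : Prop :=
  (exists w, f w != 0 /\ count id w = n) /\
  (forall w, f w != 0 -> (count id w <= n)%N).

End NC.

(* Main.v *)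
Require Import Defs.
From mathcomp Require Import all_boot all_order all_algebra.
From mathcomp Require Import ring zify.
From Stdlib Require Import FunctionalExtensionality.
Set Implicit Arguments. Unset Strict Implicit. Unset Printing Implicit Defensive.
Import GRing.Theory.
Local Open Scope ring_scope.

Section S.
Variable K : fieldType.
Implicit Types f g h : ncs K.

Lemma mulE f g w : nc_mul f g w =
  \sum_(0 <= i < (size w).+1) f (take i w) * g (drop i w).
Proof. by rewrite big_mkord. Qed.

Lemma mul_ext f f' g g' w : (forall u, f u = f' u) -> (forall u, g u = g' u) ->
  nc_mul f g w = nc_mul f' g' w.
Proof. by move=> Hf Hg; apply: eq_bigr => i _; rewrite Hf Hg. Qed.

Lemma mulDl f g h w : nc_mul (nc_add f g) h w = nc_mul f h w + nc_mul g h w.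
Proof. by rewrite -big_split; apply: eq_bigr => i _ /=; rewrite /nc_add mulrDl. Qed.
Lemma mulDr f g h w : nc_mul h (nc_add f g) w = nc_mul h f w + nc_mul h g w.
Proof. by rewrite -big_split; apply: eq_bigr => i _ /=; rewrite /nc_add mulrDr. Qed.
Lemma mulZl a f h w : nc_mul (nc_scale a f) h w = a * nc_mul f h w.
Proof. by rewrite mulr_sumr; apply: eq_bigr => i _ /=; rewrite /nc_scale mulrA. Qed.
Lemma mulZr a f h w : nc_mul h (nc_scale a f) w = a * nc_mul h f w.
Proof. by rewrite mulr_sumr; apply: eq_bigr => i _ /=; rewrite /nc_scale mulrCA. Qed.
Lemma ncmul0l h w : nc_mul (nc_zero K) h w = 0.
Proof. by rewrite /nc_mul big1 // => i _; rewrite /nc_zero mul0r. Qed.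
Lemma ncmul0r h w : nc_mul h (nc_zero K) w = 0.
Proof. by rewrite /nc_mul big1 // => i _; rewrite /nc_zero mulr0. Qed.
Lemma mulBl f g h w : nc_mul (fun u => f u - g u) h w = nc_mul f h w - nc_mul g h w.
Proof. by rewrite -sumrB; apply: eq_bigr => i _ /=; rewrite mulrBl. Qed.
Lemma mulBr f g h w : nc_mul h (fun u => f u - g u) w = nc_mul h f w - nc_mul h g w.
Proof. by rewrite -sumrB; apply: eq_bigr => i _ /=; rewrite mulrBr. Qed.

Lemma mulA f g h w : nc_mul (nc_mul f g) h w = nc_mul f (nc_mul g h) w.
Proof.
set n := size w.
pose F i j := f (take i w) * g (drop i (take j w)) * h (drop j w).
transitivity (\sum_(0 <= j < n.+1) \sum_(0 <= i < n.+1) if (i <= j)%N then F i j else 0).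
  rewrite mulE; apply: eq_big_nat => j /andP[_ Hj].
  rewrite mulE size_takel; last by rewrite -ltnS.
  rewrite mulr_suml (big_nat_widen _ _ _ _ _ Hj) big_mkcond.
  apply: eq_big_nat => i _; rewrite ltnS /= /F.
  by case: ifP => // Hij; rewrite take_takel.
rewrite exchange_big_nat mulE; apply: eq_big_nat => i /andP[_ Hi].
rewrite mulE size_drop mulr_sumr.
rewrite (@big_cat_nat _ _ _ i 0 n.+1) //; last exact: ltnW.
rewrite big_nat_cond big1 ?add0r; last first.
  by move=> j /andP[/andP[_ Hj] _]; rewrite leqNgt Hj.
rewrite -{1}(add0n i) big_addn subSn; last by rewrite -ltnS.
rewrite Monoid.mul1m; apply: eq_big_nat => k _.
by rewrite leq_addl /F mulrA take_drop drop_drop.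
Qed.

Definition zc (w : seq bool) i : K := if nth true w i then 0 else 1.

Lemma deltaE f w : nc_delta f w =
  \sum_(0 <= i < size w) zc w i * f (set_nth false w i true).
Proof.
rewrite /nc_delta big_mkcond big_mkord; apply: eq_bigr => i _ /=.
by rewrite /zc; case: (nth true w i) => /=; rewrite ?mul0r ?mul1r.
Qed.

Lemma take_set_lt (s : seq bool) i k y : (i < k)%N -> (i < size s)%N ->
  take k (set_nth false s i y) = set_nth false (take k s) i y.
Proof.
move=> hik his; apply: (@eq_from_nth _ false).
  rewrite size_take !size_set_nth (maxn_idPr his) size_take.
  by case: ltnP => h; rewrite (maxn_idPr _) //; lia.
move=> j; rewrite size_take size_set_nth (maxn_idPr his) => hj.
have hjk : (j < k)%N by case: (ltnP k (size s)) hj => h hj; lia.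
rewrite nth_take // !nth_set_nth /=; case: eqP => // _; rewrite nth_take //.
Qed.

Lemma drop_set_lt (s : seq bool) i k y : (i < k)%N -> (i < size s)%N ->
  drop k (set_nth false s i y) = drop k s.
Proof.
move=> hik his; apply: (@eq_from_nth _ false).
  by rewrite !size_drop size_set_nth (maxn_idPr his).
move=> j _; rewrite !nth_drop nth_set_nth /=.
by case: eqP => // e; lia.
Qed.

Lemma take_set_ge (s : seq bool) i k y : (k <= i)%N -> (i < size s)%N ->
  take k (set_nth false s i y) = take k s.
Proof.
move=> hik his; apply: (@eq_from_nth _ false).
  by rewrite !size_take size_set_nth (maxn_idPr his).
move=> j; rewrite size_take size_set_nth (maxn_idPr his) => hj.
have hjk : (j < k)%N by case: (ltnP k (size s)) hj => h hj; lia.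
rewrite !nth_take // nth_set_nth /=; case: eqP => // e; lia.
Qed.

Lemma drop_set_ge (s : seq bool) i k y : (k <= i)%N -> (i < size s)%N ->
  drop k (set_nth false s i y) = set_nth false (drop k s) (i - k) y.
Proof.
move=> hik his; apply: (@eq_from_nth _ false).
  rewrite !size_drop !size_set_nth (maxn_idPr his) size_drop.
  by rewrite (maxn_idPr _) //; lia.
move=> j _; rewrite !nth_drop !nth_set_nth /= nth_drop.
have -> : ((k + j)%N == i) = (j == (i - k)%N) by apply/eqP/eqP; lia.
done.
Qed.

Lemma delta_mul f g w :
  nc_delta (nc_mul f g) w = nc_mul (nc_delta f) g w + nc_mul f (nc_delta g) w.
Proof.
set n := size w.
rewrite deltaE !mulE -big_split /=.
transitivity (\sum_(0 <= i < n) \sum_(0 <= k < n.+1) zc w i *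
   (f (take k (set_nth false w i true)) * g (drop k (set_nth false w i true)))).
  apply: eq_big_nat => i /andP[_ hi].
  by rewrite mulE size_set_nth (maxn_idPr hi) mulr_sumr.
rewrite exchange_big_nat /=; apply: eq_big_nat => k /andP[_ hk].
rewrite ltnS in hk.
rewrite (@big_cat_nat _ _ _ k 0 n) //=.
congr (_ + _).
  rewrite deltaE mulr_suml size_takel //.
  apply: eq_big_nat => i /andP[_ hi].
  rewrite take_set_lt ?drop_set_lt //; try lia.
  by rewrite /zc nth_take // mulrA.
rewrite deltaE mulr_sumr size_drop.
rewrite -{1}(add0n k) big_addn; apply: eq_big_nat => j /andP[_ hj].
rewrite take_set_ge ?drop_set_ge; try lia.
rewrite /zc nth_drop addnK addnC mulrCA; congr (_ * (_ * _)).
Qed.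

Notation br := (@nc_bracket K).
Notation X := (nc_x K).
Notation Y := (nc_y K).

Lemma br_ext f f' g g' w : (forall u, f u = f' u) -> (forall u, g u = g' u) ->
  br f g w = br f' g' w.
Proof. by move=> Hf Hg; rewrite /nc_bracket (mul_ext w Hf Hg) (mul_ext w Hg Hf). Qed.
Lemma brDl f g h w : br (nc_add f g) h w = br f h w + br g h w.
Proof. rewrite /nc_bracket mulDl mulDr; ring. Qed.
Lemma brDr f g h w : br h (nc_add f g) w = br h f w + br h g w.
Proof. rewrite /nc_bracket mulDl mulDr; ring. Qed.
Lemma brZl a f h w : br (nc_scale a f) h w = a * br f h w.
Proof. rewrite /nc_bracket mulZl mulZr; ring. Qed.
Lemma brZr a f h w : br h (nc_scale a f) w = a * br h f w.
Proof. rewrite /nc_bracket mulZl mulZr; ring. Qed.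
Lemma br0l h w : br (nc_zero K) h w = 0.
Proof. by rewrite /nc_bracket ncmul0l ncmul0r subr0. Qed.
Lemma br0r h w : br h (nc_zero K) w = 0.
Proof. by rewrite /nc_bracket ncmul0l ncmul0r subr0. Qed.
Lemma brN f g w : br g f w = - br f g w.
Proof. by rewrite /nc_bracket opprB. Qed.
Lemma brxx f w : br f f w = 0.
Proof. by rewrite /nc_bracket subrr. Qed.

Lemma jacobi f g h w : br f (br g h) w = br (br f g) h w + br g (br f h) w.
Proof.
rewrite /nc_bracket !mulBl !mulBr !mulA; ring.
Qed.

Lemma deltaD f g w : nc_delta (nc_add f g) w = nc_delta f w + nc_delta g w.
Proof. by rewrite !deltaE -big_split; apply: eq_bigr => i _; rewrite /nc_add mulrDr. Qed.
Lemma deltaZ a f w : nc_delta (nc_scale a f) w = a * nc_delta f w.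
Proof. by rewrite !deltaE mulr_sumr; apply: eq_bigr => i _; rewrite /nc_scale mulrCA. Qed.
Lemma delta0 w : nc_delta (nc_zero K) w = 0.
Proof. by rewrite deltaE big1 // => i _; rewrite /nc_zero mulr0. Qed.
Lemma deltaB f g w : nc_delta (fun u => f u - g u) w = nc_delta f w - nc_delta g w.
Proof. by rewrite !deltaE -sumrB; apply: eq_bigr => i _; rewrite mulrBr. Qed.
Lemma delta_ext f g w : (forall u, f u = g u) -> nc_delta f w = nc_delta g w.
Proof. by move=> H; rewrite !deltaE; apply: eq_bigr => i _; rewrite H. Qed.

Lemma delta_br f g w :
  nc_delta (br f g) w = br (nc_delta f) g w + br f (nc_delta g) w.
Proof. rewrite /nc_bracket deltaB !delta_mul; ring. Qed.

Lemma deltaX w : nc_delta X w = 0.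
Proof.
rewrite deltaE big_mkord big1 // => -[i hi] _ /=.
rewrite /nc_x; case: eqP; last by rewrite mulr0.
move=> E; have : true \in set_nth false w i true.
  apply/(nthP false); exists i; first by rewrite size_set_nth leq_max ltnSn.
  by rewrite nth_set_nth /= eqxx.
by rewrite E.
Qed.

Lemma deltaY w : nc_delta Y w = X w.
Proof.
rewrite deltaE; case: w => [|b [|c w]].
- by rewrite big_geq.
- by rewrite big_nat1 /zc /nc_y /nc_x /=; case: b; rewrite /= ?mulr1 ?mul0r.
rewrite big_mkord big1; first by rewrite /nc_x; case: ifP => // /eqP.
move=> -[i hi] _ /=; rewrite /nc_y; case: eqP; last by rewrite mulr0.
move=> /(congr1 size); rewrite size_set_nth /=; lia.
Qed.

Fixpoint yn n : ncs K := if n is m.+1 then br X (yn m) else Y.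
Definition U : ncs K := br Y X.
Definition Sxu (g : ncs K) : Prop := g = X \/ g = U.

Lemma lie_gen_ext S f g : lie_gen S f -> (forall w, f w = g w) -> lie_gen S g.
Proof.
move=> H E; have -> : g = f by apply: functional_extensionality => w; rewrite E.
exact: H.
Qed.

Lemma delta_Sxu g : lie_gen Sxu g -> forall w, nc_delta g w = 0.
Proof.
elim => [h [->|->]| |h1 h2 _ IH1 _ IH2|a h _ IH|h1 h2 _ IH1 _ IH2] w.
- exact: deltaX.
- rewrite /U delta_br (br_ext w deltaY (fun u => erefl)) brxx.
  by rewrite (br_ext w (fun u => erefl) deltaX) br0r addr0.
- exact: delta0.
- by rewrite deltaD IH1 IH2 addr0.
- by rewrite deltaZ IH mulr0.
- by rewrite delta_br (br_ext w IH1 (fun u => erefl)) (br_ext w (fun u => erefl) IH2) br0l br0r addr0.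
Qed.

Lemma yn_Sxu n : lie_gen Sxu (yn n.+1).
Proof.
elim: n => [|n IH].
  apply: (@lie_gen_ext _ (nc_scale (-1) U)).
    by apply: lie_gen_scale; apply: lie_gen_base; right.
  by move=> w; rewrite /nc_scale /U /= [br Y X w]brN mulN1r opprK.
apply: (@lie_gen_ext _ (br X (yn n.+1))) => //.
by apply: lie_gen_bracket => //; apply: lie_gen_base; left.
Qed.

Lemma lieS_delta_ok f : lie_gen Sxu f -> forall w, nc_delta f w = 0.
Proof. exact: delta_Sxu. Qed.

Definition hom (g : ncs K) d := forall w, count id w != d -> g w = 0.

Lemma count_td (w : seq bool) i : (count id (take i w) + count id (drop i w))%N = count id w.
Proof. by rewrite -count_cat cat_take_drop. Qed.

Lemma hom_mul f g a b : hom f a -> hom g b -> hom (nc_mul f g) (a + b)%N.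
Proof.
move=> Hf Hg w Hw; rewrite /nc_mul big1 // => i _.
have := count_td w i.
case: (eqVneq (count id (take i w)) a) => ea.
  case: (eqVneq (count id (drop i w)) b) => eb.
    by move=> E; move: Hw; rewrite -E ea eb eqxx.
  by rewrite (Hg _ eb) mulr0.
by rewrite (Hf _ ea) mul0r.
Qed.

Lemma hom_br f g a b : hom f a -> hom g b -> hom (br f g) (a + b)%N.
Proof.
move=> Hf Hg w Hw; rewrite /nc_bracket (hom_mul Hf Hg Hw).
by rewrite addnC in Hw; rewrite (hom_mul Hg Hf Hw) subrr.
Qed.

Lemma homX : hom X 0.
Proof. by move=> w; rewrite /nc_x; case: (w =P [:: false]) => // ->. Qed.
Lemma homY : hom Y 1.
Proof. by move=> w; rewrite /nc_y; case: (w =P [:: true]) => // ->. Qed.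
Lemma hom_yn n : hom (yn n) 1.
Proof. elim: n => [|n IH] /=; [exact: homY | exact: (hom_br homX IH)]. Qed.
Lemma hom_yy a b : hom (br (yn a) (yn b)) 2.
Proof. exact: (hom_br (hom_yn a) (hom_yn b)). Qed.

Definition eq2 (g h : ncs K) := forall w, (count id w <= 2)%N -> g w = h w.

Lemma eq2_mul f f' g g' : eq2 f f' -> eq2 g g' -> eq2 (nc_mul f g) (nc_mul f' g').
Proof.
move=> Hf Hg w Hw; apply: eq_bigr => i _.
have := count_td w i => E.
by rewrite Hf ?Hg //; lia.
Qed.

Lemma eq2_br f f' g g' : eq2 f f' -> eq2 g g' -> eq2 (br f g) (br f' g').
Proof.
by move=> Hf Hg w Hw; rewrite /nc_bracket (eq2_mul Hf Hg Hw) (eq2_mul Hg Hf Hw).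
Qed.

Lemma eq2_trans f g h : eq2 f g -> eq2 g h -> eq2 f h.
Proof. by move=> H1 H2 w Hw; rewrite H1 // H2. Qed.

Lemma eq2_pw f g : (forall w, f w = g w) -> eq2 f g.
Proof. by move=> H w _. Qed.

Lemma hom_eq2 g d : (2 < d)%N -> hom g d -> eq2 g (nc_zero K).
Proof. by move=> hd Hg w Hw; rewrite Hg //; apply/eqP; lia. Qed.

Inductive W : ncs K -> Prop :=
| W_x : W X
| W_y n : W (yn n)
| W_yy a b : W (br (yn a) (yn b))
| W_0 : W (nc_zero K)
| W_add f g : W f -> W g -> W (nc_add f g)
| W_scale a f : W f -> W (nc_scale a f).

Definition gen (G : ncs K) := G = X \/ (exists n, G = yn n) \/ (exists a b, G = br (yn a) (yn b)).

Definition clos A B := exists C, W C /\ eq2 (br A B) C.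

Lemma clos_antisym A B : clos B A -> clos A B.
Proof.
move=> [C [HC E]]; exists (nc_scale (-1) C); split; first exact: W_scale.
by move=> w Hw; rewrite brN E // /nc_scale mulN1r.
Qed.

Lemma clos_hom A B a b : hom A a -> hom B b -> (2 < a + b)%N -> clos A B.
Proof. by move=> HA HB hab; exists (nc_zero K); split; [exact: W_0 | exact: hom_eq2 hab (hom_br HA HB)]. Qed.

Lemma clos_X B : gen B -> clos X B.
Proof.
case=> [->|[[n ->]|[a [b ->]]]].
- by exists (nc_zero K); split; [exact: W_0| move=> w _; rewrite brxx].
- by exists (yn n.+1); split; [exact: W_y | move=> w _].
exists (nc_add (br (yn a.+1) (yn b)) (br (yn a) (yn b.+1))); split.
  by apply: W_add; apply: W_yy.
by move=> w _; rewrite jacobi.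
Qed.

Lemma clos_gen A B : gen A -> gen B -> clos A B.
Proof.
move=> hA hB; case: (hA) => [->|[[n ->]|[a [b ->]]]]; first exact: clos_X.
- case: (hB) => [->|[[m ->]|[a [b ->]]]].
  + by apply: clos_antisym; apply: clos_X; right; left; exists n.
  + by exists (br (yn n) (yn m)); split; [exact: W_yy | move=> w _].
  + exact: clos_hom (hom_yn n) (hom_yy a b) _.
case: (hB) => [->|[[m ->]|[c [d ->]]]].
- by apply: clos_antisym; apply: clos_X; right; right; exists a, b.
- exact: clos_hom (hom_yy a b) (hom_yn m) _.
- exact: clos_hom (hom_yy a b) (hom_yy c d) _.
Qed.

Lemma clos_0r A : clos A (nc_zero K).
Proof. by exists (nc_zero K); split; [exact: W_0 | move=> w _; rewrite br0r]. Qed.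
Lemma clos_0l A : clos (nc_zero K) A.
Proof. by exists (nc_zero K); split; [exact: W_0 | move=> w _; rewrite br0l]. Qed.
Lemma clos_addr A B1 B2 : clos A B1 -> clos A B2 -> clos A (nc_add B1 B2).
Proof.
move=> [C1 [H1 E1]] [C2 [H2 E2]]; exists (nc_add C1 C2); split; first exact: W_add.
by move=> w Hw; rewrite brDr E1 // E2.
Qed.
Lemma clos_addl A B1 B2 : clos B1 A -> clos B2 A -> clos (nc_add B1 B2) A.
Proof.
move=> [C1 [H1 E1]] [C2 [H2 E2]]; exists (nc_add C1 C2); split; first exact: W_add.
by move=> w Hw; rewrite brDl E1 // E2.
Qed.
Lemma clos_scaler a A B : clos A B -> clos A (nc_scale a B).
Proof.
move=> [C [H E]]; exists (nc_scale a C); split; first exact: W_scale.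
by move=> w Hw; rewrite brZr E.
Qed.
Lemma clos_scalel a A B : clos B A -> clos (nc_scale a B) A.
Proof.
move=> [C [H E]]; exists (nc_scale a C); split; first exact: W_scale.
by move=> w Hw; rewrite brZl E.
Qed.

Lemma clos_genW A B : gen A -> W B -> clos A B.
Proof.
move=> hA; elim.
- by apply: clos_gen => //; left.
- by move=> n; apply: clos_gen => //; right; left; exists n.
- by move=> a b; apply: clos_gen => //; right; right; exists a, b.
- exact: clos_0r.
- by move=> f g _ H1 _ H2; apply: clos_addr.
- by move=> a f _ H; apply: clos_scaler.
Qed.

Lemma clos_W A B : W A -> W B -> clos A B.
Proof.
move=> hA hB; elim: hA.
- by apply: clos_genW => //; left.
- by move=> n; apply: clos_genW => //; right; left; exists n.
- by move=> a b; apply: clos_genW => //; right; right; exists a, b.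
- exact: clos_0l.
- by move=> f g _ H1 _ H2; apply: clos_addl.
- by move=> a f _ H; apply: clos_scalel.
Qed.

Lemma free_W g : free_lie g -> exists C, W C /\ eq2 g C.
Proof.
elim.
- move=> h [->|->]; first by exists X; split; [exact: W_x | move=> w _].
  by exists (yn 0); split; [exact: W_y | move=> w _].
- by exists (nc_zero K); split; [exact: W_0 | move=> w _].
- move=> f h _ [C1 [H1 E1]] _ [C2 [H2 E2]]; exists (nc_add C1 C2); split; first exact: W_add.
  by move=> w Hw; rewrite /nc_add E1 // E2.
- move=> a f _ [C [H E]]; exists (nc_scale a C); split; first exact: W_scale.
  by move=> w Hw; rewrite /nc_scale E.
- move=> f h _ [C1 [H1 E1]] _ [C2 [H2 E2]].
  have [C [HC EC]] := clos_W H1 H2.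
  exists C; split => //; apply: eq2_trans EC; exact: eq2_br.
Qed.

Lemma W_vanish C : W C -> forall w, (2 < count id w)%N -> C w = 0.
Proof.
elim.
- by move=> w hw; apply: homX; apply/eqP; lia.
- by move=> n w hw; apply: hom_yn; apply/eqP; lia.
- by move=> a b w hw; apply: hom_yy; apply/eqP; lia.
- by [].
- by move=> f g _ H1 _ H2 w hw; rewrite /nc_add H1 // H2 // addr0.
- by move=> a f _ H w hw; rewrite /nc_scale H // mulr0.
Qed.

Lemma X_size w : size w != 1%N -> X w = 0.
Proof. by rewrite /nc_x; case: (w =P [:: false]) => // ->. Qed.

Lemma mulX_l g b s : nc_mul X g (b :: s) = if b then 0 else g s.
Proof.
rewrite /nc_mul big_ord_recl /= [X [::]]X_size // mul0r add0r.
rewrite big_ord_recl /= big1 ?addr0.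
  rewrite /nc_x; case: b => /=; first by rewrite mul0r.
  by rewrite add0n take0 drop0 eqxx mul1r.
move=> [i hi] _ /=; rewrite X_size ?mul0r //= add0n /bump /= size_take.
by case: ltnP => _; lia.
Qed.

Lemma mulX_r g s : nc_mul g X (rcons s true) = 0.
Proof.
rewrite /nc_mul big1 // => i _.
rewrite /nc_x; case: eqP => E; last by rewrite mulr0.
have := cat_take_drop i (rcons s true); rewrite E => /(congr1 (last false)).
by rewrite last_rcons last_cat.
Qed.

Lemma yn_eval n k : yn n (rcons (nseq k false) true) = if n == k then 1 else 0.
Proof.
elim: n k => [|n IH] [|k] /=.
- by rewrite /nc_y.
- by rewrite /nc_y; case: eqP => // /(congr1 size); rewrite size_rcons.
- by rewrite /nc_bracket mulX_l (mulX_r _ [::]) subr0.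
- by rewrite /nc_bracket mulX_l (mulX_r _ (nseq k.+1 false)) subr0 IH eqSS.
Qed.

Definition E b : ncs K := br Y (yn b.+1).

Definition Decomp (C : ncs K) := exists C' c N (d : nat -> K),
  [/\ lie_gen Sxu C', (forall b, (N <= b)%N -> d b = 0) &
   forall w, C w = C' w + c * Y w + \sum_(0 <= b < N) d b * E b w].

Lemma sum_ext N M (d : nat -> K) (F : nat -> K) : (forall b, (N <= b)%N -> d b = 0) ->
  (N <= M)%N -> \sum_(0 <= b < N) d b * F b = \sum_(0 <= b < M) d b * F b.
Proof.
move=> hd hNM; rewrite (@big_cat_nat _ _ _ N 0 M) //= [Q in _ = _ + Q]big_nat_cond.
by rewrite [Q in _ = _ + Q]big1 ?addr0 // => b /andP[/andP[hb _] _]; rewrite hd // mul0r.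
Qed.

Lemma sum_pick N (G : nat -> K) m :
  \sum_(0 <= b < N) (if b == m then G b else 0) = if (m < N)%N then G m else 0.
Proof. by rewrite -big_mkcond big_nat1_eq. Qed.

Lemma W_decomp C : W C -> Decomp C.
Proof.
have Z0 : forall b, (0 <= b)%N -> (fun _ : nat => 0 : K) b = 0 by [].
elim.
- exists X, 0, 0%N, (fun _ => 0); split => //; first by apply: lie_gen_base; left.
  by move=> w; rewrite big_geq // mul0r !addr0.
- case=> [|n].
    exists (nc_zero K), 1, 0%N, (fun _ => 0); split => //; first exact: lie_gen_zero.
    by move=> w; rewrite big_geq // mul1r addr0 /nc_zero add0r.
  exists (yn n.+1), 0, 0%N, (fun _ => 0); split => //; first exact: yn_Sxu.
  by move=> w; rewrite big_geq // mul0r !addr0.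
- case=> [|a] [|b].
  + exists (nc_zero K), 0, 0%N, (fun _ => 0); split => //; first exact: lie_gen_zero.
    by move=> w; rewrite big_geq // mul0r !addr0 brxx.
  + exists (nc_zero K), 0, b.+1, (fun i => if i == b then 1 else 0); split => //.
    * exact: lie_gen_zero.
    * by move=> i hi; case: eqP => // e; lia.
    move=> w; rewrite /nc_zero mul0r !add0r.
    under eq_bigr => i _ do rewrite (fun_if (fun t => t * E i w)) mul1r mul0r.
    by rewrite sum_pick ltnSn.
  + exists (nc_zero K), 0, a.+1, (fun i => if i == a then -1 else 0); split => //.
    * exact: lie_gen_zero.
    * by move=> i hi; case: eqP => // e; lia.
    move=> w; rewrite /nc_zero mul0r !add0r.
    under eq_bigr => i _ do rewrite (fun_if (fun t => t * E i w)) mulN1r mul0r.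
    by rewrite sum_pick ltnSn /E brN.
  + exists (br (yn a.+1) (yn b.+1)), 0, 0%N, (fun _ => 0); split => //.
      by apply: lie_gen_bracket; apply: yn_Sxu.
    by move=> w; rewrite big_geq // mul0r !addr0.
- exists (nc_zero K), 0, 0%N, (fun _ => 0); split => //; first exact: lie_gen_zero.
  by move=> w; rewrite big_geq // mul0r !addr0.
- move=> f g _ [C1 [c1 [N1 [d1 [H1 D1 E1]]]]] _ [C2 [c2 [N2 [d2 [H2 D2 E2]]]]].
  exists (nc_add C1 C2), (c1 + c2), (maxn N1 N2), (fun b => d1 b + d2 b); split.
  + exact: lie_gen_add.
  + by move=> b hb; rewrite D1 ?D2 ?addr0 //; lia.
  move=> w; rewrite /nc_add E1 E2 (sum_ext _ D1 (leq_maxl N1 N2)).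
  rewrite (sum_ext _ D2 (leq_maxr N1 N2)).
  under [Q in _ = _ + Q]eq_bigr do rewrite mulrDl.
  rewrite big_split /=; ring.
- move=> a f _ [C1 [c1 [N1 [d1 [H1 D1 E1]]]]].
  exists (nc_scale a C1), (a * c1), N1, (fun b => a * d1 b); split.
  + exact: lie_gen_scale.
  + by move=> b hb; rewrite D1 ?mulr0.
  move=> w; rewrite /nc_scale E1 !mulrDr mulr_sumr.
  under eq_bigr => i _ do rewrite mulrA.
  ring.
Qed.

Lemma delta_sum N (d : nat -> K) (F : nat -> ncs K) w :
  nc_delta (fun u => \sum_(0 <= b < N) d b * F b u) w =
  \sum_(0 <= b < N) d b * nc_delta (F b) w.
Proof.
rewrite deltaE; under eq_bigr => i _ do rewrite mulr_sumr.
rewrite exchange_big_nat; apply: eq_big_nat => b _.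
by rewrite deltaE mulr_sumr; apply: eq_big_nat => i _; rewrite mulrCA.
Qed.

Lemma delta_E b w : nc_delta (E b) w = yn b.+2 w.
Proof.
rewrite /E delta_br (br_ext w deltaY (fun u => erefl)).
rewrite (br_ext (g' := nc_zero K) w (fun u => erefl) (fun u => delta_Sxu (yn_Sxu b) u)).
by rewrite br0r addr0.
Qed.

Lemma main_fwd f : free_lie f -> (forall w, f w != 0 -> (count id w <= 2)%N) ->
  (forall w, nc_delta f w = 0) -> lie_gen Sxu f.
Proof.
move=> hL hdeg Hd.
have [C [HW HE]] := free_W hL.
have fC : forall w, f w = C w.
  move=> w; case: (leqP (count id w) 2) => hw; first exact: HE.
  rewrite (W_vanish HW hw); case: (eqVneq (f w) 0) => // /hdeg; lia.
have [C' [c [N [d [HC' HD HCd]]]]] := W_decomp HW.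
have key : forall w, c * X w + \sum_(0 <= b < N) d b * yn b.+2 w = 0.
  move=> w; transitivity (nc_delta f w); last exact: Hd.
  rewrite (delta_ext w fC) (delta_ext w HCd).
  rewrite (@delta_ext _ (nc_add C' (nc_add (nc_scale c Y)
             (fun u => \sum_(0 <= b < N) d b * E b u)))); last first.
    by move=> u; rewrite /nc_add /nc_scale addrA.
  rewrite !deltaD deltaZ delta_sum (delta_Sxu HC') deltaY add0r.
  by congr (_ + _); apply: eq_big_nat => b _; rewrite delta_E.
have c0 : c = 0.
  have := key [:: false]; rewrite big_nat_cond big1 ?addr0.
    by rewrite /nc_x eqxx mulr1.
  by move=> b _; rewrite hom_yn ?mulr0.
have d0 : forall m, d m = 0.
  move=> m; case: (leqP N m) => hm; first exact: HD.
  have := key (rcons (nseq m.+2 false) true).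
  rewrite X_size ?size_rcons ?size_nseq // mulr0 add0r.
  under eq_bigr => b _ do rewrite yn_eval eqSS (fun_if (fun t => d b * t)) mulr1 mulr0.
  by rewrite sum_pick hm.
apply: (lie_gen_ext HC') => w.
rewrite fC HCd c0 mul0r addr0 big_nat_cond big1 ?addr0 // => b _.
by rewrite d0 mul0r.
Qed.

Lemma main_bwd f : lie_gen Sxu f -> forall w, nc_delta f w = 0.
Proof. exact: delta_Sxu. Qed.
End S.

Theorem corollary5p2 (K : fieldType) (hK : [pchar K] =i pred0)
  (f : ncs K) (hL : free_lie f) (hdeg : deg_y_eq f 2) :
  (forall w, nc_delta f w = 0) <->
  lie_gen (fun g => g = nc_x K \/ g = nc_bracket (nc_y K) (nc_x K)) f.
Proof.
split.
- move=> Hd; exact: (main_fwd hL (proj2 hdeg) Hd).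
- exact: main_bwd.
Qed.
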